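(* Let $n>1$ be an integer and $\varphi(z)=z|z|^{n-2}$. For a constant $B>0$ consider the problem \[ \left(\varphi(u'(r))\right)'+\frac{n-1}{r}\varphi(u'(r))+Be^{u}=0 \quad (0<r<1),\qquad u'(0)=u(1)=0 . \] There is a constant $B(n)>0$ such that this problem has exactly two solutions for $0<B<B(n)$, exactly one solution for $B=B(n)$, and no solutions for $B>B(n)$.
   Context: With $\varphi(z)=z|z|^{p-2}$ and $p=n$, the operator $\left(\varphi(u')\right)'+\frac{n-1}{r}\varphi(u')$ is the radial $n$-Laplacian in $\mathbb{R}^n$; the problem is the radial Dirichlet problem on the unit ball. *)

(* Defs.v *)
From Stdlib Require Import Reals.
From Coquelicot Require Import Coquelicot.
Open Scope R_scope.

(* phi(z) = z |z|^(n-2), n a natural number >= 2 (so n-2 is a natural exponent;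
   for n = 2, |z|^0 = 1 and phi is the identity). *)
Definition phi (n : nat) (z : R) : R := z * (Rabs z) ^ (n - 2).

(* u is a solution of
     (phi(u'))' + (n-1)/r phi(u') + B e^u = 0  on (0,1),   u'(0) = u(1) = 0.
   Regularity: u is continuous on [0,1] (one-sided at the endpoints),
   differentiable on (0,1), phi(u') is differentiable on (0,1), the ODE holds
   pointwise on (0,1), u'(r) -> 0 as r -> 0+ (u'(0) = 0), and u(1) = 0. *)
Definition is_solution (n : nat) (B : R) (u : R -> R) : Prop :=
  filterlim u (at_right 0) (locally (u 0)) /\
  filterlim u (at_left 1) (locally (u 1)) /\
  (forall r, 0 < r < 1 ->
     ex_derive u r /\
     ex_derive (fun s => phi n (Derive u s)) r /\
     Derive (fun s => phi n (Derive u s)) r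
       + (INR n - 1) / r * phi n (Derive u r) + B * exp (u r) = 0) /\
  filterlim (Derive u) (at_right 0) (locally 0) /\
  u 1 = 0.

(* Solutions are functions on [0,1]: two functions are the same solution iff
   they agree on [0,1]. *)
Definition same_on01 (u v : R -> R) : Prop := forall r, 0 <= r <= 1 -> u r = v r.

Definition no_solution (n : nat) (B : R) : Prop :=
  forall u, ~ is_solution n B u.

Definition exactly_one_solution (n : nat) (B : R) : Prop :=
  exists u, is_solution n B u /\ forall v, is_solution n B v -> same_on01 v u.

Definition exactly_two_solutions (n : nat) (B : R) : Prop :=
  exists u1 u2, is_solution n B u1 /\ is_solution n B u2 /\ ~ same_on01 u1 u2 /\
    forall v, is_solution n B v -> same_on01 v u1 \/ same_on01 v u2.

(* Main.v *)
Require Import Defs.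
From Stdlib Require Import Reals Lra Lia.
From Coquelicot Require Import Coquelicot.
Open Scope R_scope.

Lemma ball_R1 (x e y : R) : ball x e y -> Rabs (y - x) < e.
Proof. intro H; exact H. Qed.
Lemma ball_R2 (x e y : R) : Rabs (y - x) < e -> ball x e y.
Proof. intro H; exact H. Qed.

Section Lims.
Context {F : (R -> Prop) -> Prop} {FF : Filter F}.

Lemma lim_plus (f g : R -> R) a b :
  filterlim f F (locally a) -> filterlim g F (locally b) ->
  filterlim (fun x => f x + g x) F (locally (a + b)).
Proof. intros Hf Hg. eapply filterlim_comp_2; [exact Hf|exact Hg|].
  apply (filterlim_plus a b). Qed.

Lemma lim_mult (f g : R -> R) a b :
  filterlim f F (locally a) -> filterlim g F (locally b) ->
  filterlim (fun x => f x * g x) F (locally (a * b)).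
Proof. intros Hf Hg. eapply filterlim_comp_2; [exact Hf|exact Hg|].
  apply (filterlim_mult a b). Qed.

Lemma lim_comp (f h : R -> R) a :
  filterlim f F (locally a) -> continuous h a ->
  filterlim (fun x => h (f x)) F (locally (h a)).
Proof. intros Hf Hh. eapply filterlim_comp; [exact Hf|exact Hh]. Qed.

Lemma lim_const (c : R) : filterlim (fun _ => c) F (locally c).
Proof. apply filterlim_const. Qed.

End Lims.

Lemma lim_R0 : filterlim (fun x => x) (at_right 0) (locally 0).
Proof.
  intros P HP. unfold filtermap. unfold at_right, within.
  apply filter_imp with (2 := HP). intros x Hx _. exact Hx.
Qed.

Lemma lim_L1 : filterlim (fun x => x) (at_left 1) (locally 1).
Proof.
  intros P HP. unfold filtermap. unfold at_left, within.
  apply filter_imp with (2 := HP). intros x Hx _. exact Hx.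
Qed.

Lemma ev01 : at_right 0 (fun x => 0 < x < 1).
Proof.
  exists (mkposreal 1 Rlt_0_1). intros y Hy Hp. apply ball_R1 in Hy. cbn [pos] in Hy.
  rewrite Rminus_0_r in Hy. apply Rabs_def2 in Hy. lra.
Qed.

Lemma evL01 : at_left 1 (fun x => 0 < x < 1).
Proof.
  exists (mkposreal 1 Rlt_0_1). intros y Hy Hp. apply ball_R1 in Hy. cbn [pos] in Hy.
  apply Rabs_def2 in Hy. lra.
Qed.

Lemma near_pos x : 0 < x -> locally x (fun y => 0 < y).
Proof.
  intro Hx. exists (mkposreal x Hx). intros y Hy. apply ball_R1 in Hy. cbn [pos] in Hy.
  apply Rabs_def2 in Hy. lra.
Qed.

Lemma cont_at_left1 (f : R -> R) : continuous f 1 ->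
  filterlim f (at_left 1) (locally (f 1)).
Proof. intro H. eapply filterlim_comp; [exact lim_L1| exact H]. Qed.

Lemma at_right_pt (P : R -> Prop) x : 0 < x -> at_right 0 P -> exists s, 0 < s < x /\ P s.
Proof.
  intros Hx [d Hd]. exists (Rmin (d/2) (x/2)).
  assert (0 < Rmin (d/2) (x/2)). { apply Rmin_pos; destruct d; simpl; lra. }
  split. split; auto. apply Rle_lt_trans with (x/2). apply Rmin_r. lra.
  apply Hd; auto. apply ball_R2. rewrite Rminus_0_r, Rabs_pos_eq by lra.
  apply Rle_lt_trans with (d/2). apply Rmin_l. destruct d; simpl; lra.
Qed.

Lemma Rpower_lim0 c : 0 < c -> filterlim (fun s => Rpower s c) (at_right 0) (locally 0).
Proof.
  intro Hc. apply filterlim_locally. intro eps.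
  exists (mkposreal (Rpower eps (/ c)) (exp_pos _)). intros y Hy Hp.
  apply ball_R1 in Hy. cbn [pos] in Hy. rewrite Rminus_0_r, Rabs_pos_eq in Hy by lra.
  apply ball_R2. rewrite Rminus_0_r, Rabs_pos_eq by (apply Rlt_le, exp_pos).
  replace (pos eps) with (Rpower (Rpower eps (/c)) c).
  apply Rlt_Rpower_l; auto.
  rewrite Rpower_mult, Rinv_l by lra. apply Rpower_1. destruct eps; auto.
Qed.

Lemma cont_of_deriv (f : R -> R) x l : is_derive f x l -> continuity_pt f x.
Proof. intro H. apply is_derive_Reals in H. apply derivable_continuous_pt. exists l; exact H. Qed.

Lemma continuous_of_deriv (f : R -> R) x l : is_derive f x l -> continuous f x.
Proof. intro H. apply continuity_pt_filterlim. eapply cont_of_deriv; eauto. Qed.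

Lemma cont_MVT_pts (f : R -> R) a b df :
  a < b -> (forall x, a <= x <= b -> is_derive f x (df x)) ->
  exists c, a <= c <= b /\ f b - f a = df c * (b - a).
Proof.
  intros Hab Hd.
  destruct (MVT_gen f a b df) as [c [Hc Hf]].
  - intros x Hx. rewrite Rmin_left, Rmax_right in Hx by lra. apply Hd; lra.
  - intros x Hx. rewrite Rmin_left, Rmax_right in Hx by lra.
    eapply cont_of_deriv. apply Hd; lra.
  - rewrite Rmin_left, Rmax_right in Hc by lra. eauto.
Qed.

Lemma const_from_lim (f : R -> R) L :
  (forall x, 0 < x < 1 -> is_derive f x 0) ->
  filterlim f (at_right 0) (locally L) -> forall x, 0 < x < 1 -> f x = L.
Proof.
  intros Hd Hl x Hx.
  assert (Hc : filterlim f (at_right 0) (locally (f x))).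
  { apply filterlim_ext_loc with (f := fun _ => f x).
    2: apply filterlim_const.
    exists (mkposreal x (proj1 Hx)). intros y Hy Hp. apply ball_R1 in Hy. cbn [pos] in Hy.
    apply Rabs_def2 in Hy.
    destruct (cont_MVT_pts f y x (fun _ => 0)) as [c [Hc1 Hc2]]; try lra.
    intros z Hz. apply Hd. lra. }
  assert (PF : ProperFilter' (at_right 0)).
  { apply Proper_StrongProper, at_right_proper_filter. }
  exact (@filterlim_locally_unique R R_AbsRing R_NormedModule (at_right 0) PF f (f x) L Hc Hl).
Qed.

Lemma neg_from_lim (f df : R -> R) :
  (forall x, 0 < x < 1 -> is_derive f x (df x)) ->
  (forall x, 0 < x < 1 -> df x < 0) ->
  filterlim f (at_right 0) (locally 0) -> forall x, 0 < x < 1 -> f x < 0.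
Proof.
  intros Hd Hneg Hl.
  assert (Hdec : forall s x, 0 < s < x -> x < 1 -> f x < f s).
  { intros s x Hs Hx.
    destruct (cont_MVT_pts f s x df) as [c [Hc1 Hc2]]; try lra.
    intros z Hz. apply Hd. lra.
    assert (df c < 0) by (apply Hneg; lra).
    assert (df c * (x - s) < 0).
    { replace (df c * (x - s)) with (- ((- df c) * (x - s))) by ring.
      apply Ropp_lt_gt_0_contravar, Rmult_lt_0_compat; lra. }
    lra. }
  intros x Hx.
  assert (Hle : f (x/2) <= 0).
  { destruct (Rle_or_lt (f (x/2)) 0) as [h|h]; auto.
    apply filterlim_locally with (eps := mkposreal _ h) in Hl.
    destruct (at_right_pt _ (x/2) ltac:(lra) Hl) as [s [Hs Hb]].
    apply ball_R1 in Hb. cbn [pos] in Hb. rewrite Rminus_0_r in Hb.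
    apply Rabs_def2 in Hb.
    assert (f (x/2) < f s) by (apply Hdec; lra). lra. }
  assert (f x < f (x/2)) by (apply Hdec; lra). lra.
Qed.
Ltac nz := repeat split; first [apply Rlt_not_eq; lra | apply Rgt_not_eq; lra | apply pow_nonzero; lra].


Section K.
Variable k : nat.
Definition K1 := INR k + 1.
Definition NN := INR k + 2.
Definition q := NN / K1.
Definition nq := NN * NN / K1.
Definition pq (x : R) := if Rle_dec x 0 then 0 else Rpower x q.
Definition U (b x : R) := NN * ln (1 + b) - NN * ln (1 + b * pq x).
Definition g (b : R) := K1 / NN * nq ^ (S (S k)) * b ^ (S k) / (1 + b) ^ (S (S k)).
Definition W (x : R) := exp (/ K1 * ln x).
Definition u1 (b x : R) := - (NN * b * q * W x) / (1 + b * exp (q * ln x)).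
Definition Cc (b : R) := (NN * b * q) ^ (S k).
Definition psi1 (b x : R) := - Cc b * x / (1 + b * exp (q * ln x)) ^ (S k).

Lemma K1_pos : 0 < K1.
Proof. unfold K1. generalize (pos_INR k); lra. Qed.
Lemma NN_pos : 0 < NN.
Proof. unfold NN. generalize (pos_INR k); lra. Qed.
Lemma NN_K1 : NN = K1 + 1.
Proof. unfold NN, K1; ring. Qed.
Lemma INR_SK : INR (S k) = K1.
Proof. rewrite S_INR; reflexivity. Qed.
Lemma INR_SSK : INR (S (S k)) = NN.
Proof. rewrite !S_INR; unfold NN; ring. Qed.
Lemma q_pos : 0 < q.
Proof. unfold q. apply Rdiv_lt_0_compat; [apply NN_pos|apply K1_pos]. Qed.

Lemma exp_pow a (m : nat) : exp a ^ m = exp (INR m * a).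
Proof. rewrite <- Rpower_pow by apply exp_pos. unfold Rpower. rewrite ln_exp. reflexivity. Qed.

Lemma exp_q_ln x : 0 < x -> exp (q * ln x) = x * W x.
Proof.
  intro Hx. unfold W. replace (q * ln x) with (ln x + / K1 * ln x).
  rewrite exp_plus, exp_ln by auto. reflexivity.
  unfold q. rewrite NN_K1. field. generalize K1_pos; lra.
Qed.

Lemma W_pos x : 0 < W x.
Proof. apply exp_pos. Qed.

Lemma W_pow x : 0 < x -> W x ^ (S k) = x.
Proof.
  intro Hx. unfold W. rewrite exp_pow, INR_SK.
  rewrite <- Rmult_assoc, Rinv_r, Rmult_1_l by (generalize K1_pos; lra).
  apply exp_ln; auto.
Qed.

Lemma pq_pos x : 0 < x -> pq x = exp (q * ln x).
Proof. intro Hx. unfold pq. destruct (Rle_dec x 0); [lra|reflexivity]. Qed.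

Lemma dU b x : 0 < b -> 0 < x -> is_derive (U b) x (u1 b x).
Proof.
  intros Hb Hx.
  apply is_derive_ext_loc with (f := fun y => NN * ln (1 + b) - NN * ln (1 + b * exp (q * ln y))).
  { apply filter_imp with (2 := near_pos x Hx). intros y Hy. unfold U. rewrite pq_pos; auto. }
  auto_derive.
  { split; [auto|split; [|exact I]].
    generalize (Rmult_lt_0_compat _ _ Hb (exp_pos (q * ln x))); lra. }
  unfold u1. rewrite exp_q_ln by auto. field.
  split; apply Rgt_not_eq; [|lra].
  generalize (Rmult_lt_0_compat _ _ Hb (Rmult_lt_0_compat _ _ Hx (W_pos x))); lra.
Qed.



Lemma Dpos b x : 0 < b -> 0 < x -> 0 < 1 + b * exp (q * ln x).
Proof. intros Hb Hx. generalize (Rmult_lt_0_compat _ _ Hb (exp_pos (q * ln x))); lra. Qed.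

Lemma phi_u1 b x : 0 < b -> 0 < x -> phi (S (S k)) (u1 b x) = psi1 b x.
Proof.
  intros Hb Hx. unfold phi. replace (S (S k) - 2)%nat with k by lia.
  set (D := 1 + b * exp (q * ln x)).
  assert (HD : 0 < D) by (apply Dpos; auto).
  set (a := NN * b * q * W x / D).
  assert (Ha : 0 < a).
  { unfold a. apply Rdiv_lt_0_compat; auto.
    exact (Rmult_lt_0_compat _ _ (Rmult_lt_0_compat _ _ (Rmult_lt_0_compat _ _ NN_pos Hb) q_pos) (W_pos x)). }
  assert (E : u1 b x = - a). { unfold u1, a. fold D. field. apply Rgt_not_eq; lra. }
  rewrite E, Rabs_Ropp, Rabs_pos_eq by lra.
  replace (- a * a ^ k) with (- (a ^ S k)) by (simpl; ring).
  unfold a, psi1, Cc. fold D.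
  unfold Rdiv. rewrite !Rpow_mult_distr, pow_inv, W_pow by auto. field.
  apply pow_nonzero; lra.
Qed.

Definition dv (b x : R) :=
  - Cc b * (/ (1 + b * exp (q * ln x)) ^ S k
     - x * K1 * b * q * W x / ((1 + b * exp (q * ln x)) ^ S k * (1 + b * exp (q * ln x)))).

Lemma dpsi1 b x : 0 < b -> 0 < x -> is_derive (psi1 b) x (dv b x).
Proof.
  intros Hb Hx. unfold psi1.
  auto_derive.
  { split; [auto|split; [|exact I]]. apply Rgt_not_eq. generalize (pow_lt _ (S k) (Dpos b x Hb Hx)). simpl. auto. }
  unfold dv. rewrite exp_q_ln by auto.
  set (D := 1 + b * (x * W x)).
  assert (HD : 0 < D). { unfold D. generalize (Rmult_lt_0_compat _ _ Hb (Rmult_lt_0_compat _ _ Hx (W_pos x))); lra. }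
  change (match k with 0%nat => 1 | S _ => INR k + 1 end) with (INR (S k)). rewrite INR_SK.
  rewrite <- !tech_pow_Rmult. field.
  repeat split; apply Rgt_not_eq; first [lra | apply pow_lt; lra].
Qed.

Lemma exp_sub a c : exp (a - c) = exp a / exp c.
Proof. unfold Rminus, Rdiv. rewrite exp_plus, exp_Ropp. reflexivity. Qed.

Lemma exp_NN_ln z : 0 < z -> exp (NN * ln z) = z ^ S (S k).
Proof. intro Hz. rewrite <- Rpower_pow, INR_SSK by auto. reflexivity. Qed.

Lemma nq_eq : nq = NN * q.
Proof. unfold nq, q. field. generalize K1_pos; lra. Qed.

Lemma ode_U b x : 0 < b -> 0 < x ->
  dv b x + (INR (S (S k)) - 1) / x * psi1 b x + g b * exp (U b x) = 0.
Proof.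
  intros Hb Hx.
  assert (HD := Dpos b x Hb Hx).
  unfold U. rewrite pq_pos by auto.
  rewrite exp_sub, !exp_NN_ln by lra.
  unfold dv, psi1, g, Cc. rewrite INR_SSK, nq_eq.
  rewrite exp_q_ln by auto.
  rewrite exp_q_ln in HD by auto.
  set (D := 1 + b * (x * W x)) in *.
  assert (Hq : q * K1 = NN) by (unfold q; field; generalize K1_pos; lra).
  rewrite !Rpow_mult_distr.
  rewrite <- !tech_pow_Rmult.
  assert (0 < 1 + b) by lra.
  assert (0 < K1) by apply K1_pos. assert (0 < NN) by apply NN_pos.
  assert (Hpk : forall z, 0 < z -> z ^ k <> 0) by (intros; apply pow_nonzero; lra).
  rewrite <- Hq. rewrite NN_K1 in Hq.
  field_simplify_eq.
  unfold D; ring.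
  generalize q_pos; intro. repeat split; try (apply Hpk; lra); apply Rgt_not_eq; lra.
Qed.

Lemma U_at0 b : U b 0 = NN * ln (1 + b).
Proof. unfold U, pq. destruct (Rle_dec 0 0); [|lra]. rewrite Rmult_0_r, Rplus_0_r, ln_1. ring. Qed.

Lemma U_at1 b : U b 1 = 0.
Proof. unfold U, pq. destruct (Rle_dec 1 0); [lra|]. unfold Rpower. rewrite ln_1, Rmult_0_r, exp_0, Rmult_1_r. ring. Qed.

Lemma U_sol b : 0 < b -> is_solution (S (S k)) (g b) (U b).
Proof.
  intro Hb. unfold is_solution. split; [|split; [|split; [|split]]].
  -
    set (h := fun t => NN * ln (1 + b) - NN * ln (1 + b * t)).
    assert (Hh : continuous h 0).
    { apply continuous_of_deriv with (l := - NN * b / (1 + b * 0)). unfold h. auto_derive.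
      { lra. } field; apply Rgt_not_eq; lra. }
    assert (H0 : h 0 = U b 0) by (rewrite U_at0; unfold h; rewrite Rmult_0_r, Rplus_0_r, ln_1; ring).
    rewrite <- H0.
    apply filterlim_ext_loc with (f := fun x => h (Rpower x q)).
    { apply filter_imp with (2 := ev01). intros x Hx. unfold h, U. unfold pq.
      destruct (Rle_dec x 0); [lra|reflexivity]. }
    apply lim_comp; auto. apply Rpower_lim0, q_pos.
  - apply cont_at_left1. apply continuous_of_deriv with (l := u1 b 1). apply dU; lra.
  - intros x Hx.
    assert (HdU : forall y, 0 < y -> Derive (U b) y = u1 b y).
    { intros y Hy. apply is_derive_unique, dU; auto. }
    split; [|split].
    + eexists. apply dU; lra.
    + eexists. apply is_derive_ext_loc with (f := psi1 b).
      { apply filter_imp with (2 := near_pos x (proj1 Hx)). intros y Hy.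
        rewrite HdU, phi_u1; auto. }
      apply dpsi1; lra.
    + rewrite HdU by lra. rewrite phi_u1 by lra.
      rewrite (is_derive_unique _ x (dv b x)).
      apply ode_U; lra.
      apply is_derive_ext_loc with (f := psi1 b).
      { apply filter_imp with (2 := near_pos x (proj1 Hx)). intros y Hy.
        rewrite HdU, phi_u1; auto. }
      apply dpsi1; lra.
  -
    apply filterlim_ext_loc with
      (f := fun x => (- (NN * b * q)) * Rpower x (/ K1) * / (1 + b * Rpower x q)).
    { apply filter_imp with (2 := ev01). intros x Hx.
      rewrite (is_derive_unique _ x (u1 b x)) by (apply dU; lra).
      unfold u1, W, Rpower. field. apply Rgt_not_eq, Dpos; lra. }
    assert (Hl : filterlim (fun x => (- (NN * b * q)) * Rpower x (/ K1) * / (1 + b * Rpower x q))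
       (at_right 0) (locally ((- (NN * b * q)) * 0 * / (1 + b * 0)))).
    { apply lim_mult. apply lim_mult. apply lim_const.
      apply Rpower_lim0. apply Rinv_0_lt_compat, K1_pos.
      apply (lim_comp (fun x => Rpower x q) (fun t => / (1 + b * t))).
      apply Rpower_lim0, q_pos.
      apply continuous_of_deriv with (l := - b / (1 + b * 0) ^ 2). auto_derive.
      { apply Rgt_not_eq; lra. } field; apply Rgt_not_eq; lra. }
    replace ((- (NN * b * q)) * 0 * / (1 + b * 0)) with 0 in Hl by (field; apply Rgt_not_eq; lra).
    exact Hl.
  - apply U_at1.
Qed.

Lemma root_pow z : 0 < z -> Rpower (z ^ S k) (/ K1) = z.
Proof.
  intro Hz. rewrite <- Rpower_pow, INR_SK, Rpower_mult, Rinv_r, Rpower_1 by (auto; generalize K1_pos; lra).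
  reflexivity.
Qed.

Lemma pow_root c : 0 < c -> Rpower c (/ K1) ^ S k = c.
Proof.
  intro Hc. rewrite <- Rpower_pow by apply exp_pos.
  rewrite INR_SK, Rpower_mult, Rinv_l, Rpower_1 by (auto; generalize K1_pos; lra). reflexivity.
Qed.

Lemma phi_cont m z : continuous (phi m) z.
Proof.
  apply continuity_pt_filterlim. unfold phi.
  apply (continuity_pt_mult (fun x => x) (fun x => Rabs x ^ (m - 2))).
  apply derivable_continuous_pt, derivable_pt_id.
  apply (continuity_pt_comp Rabs (fun x => x ^ (m - 2))). apply Rcontinuity_abs.
  apply derivable_continuous_pt, derivable_pt_pow.
Qed.

Section Cl.
Variable B : R.
Variable u : R -> R.
Hypothesis HB : 0 < B.
Hypothesis Hsol : is_solution (S (S k)) B u.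

Let d := Derive u.
Let ps := fun r => phi (S (S k)) (Derive u r).
Let P := fun r => r ^ S k * ps r.

Lemma Hdu r : 0 < r < 1 -> is_derive u r (d r).
Proof. intro Hr. destruct Hsol as [_ [_ [H _]]]. apply Derive_correct, (H r Hr). Qed.

Lemma HdP r : 0 < r < 1 -> is_derive P r (- B * r ^ S k * exp (u r)).
Proof.
  intro Hr. destruct Hsol as [_ [_ [H _]]]. destruct (H r Hr) as [_ [Hps Hode]].
  unfold P. auto_derive.
  { exact Hps. }
  change (Derive (fun x => ps x) r) with (Derive ps r).
  assert (Hm : (match k with 0%nat => 1 | S _ => INR k + 1 end) = K1) by (rewrite <- INR_SK; reflexivity).
  rewrite Hm.
  unfold ps in *. rewrite INR_SSK in Hode.
  assert (Hr0 : r <> 0) by (apply Rgt_not_eq; lra).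
  replace (Derive (fun s : R => phi (S (S k)) (Derive u s)) r) with
    (- ((NN - 1) / r * phi (S (S k)) (Derive u r)) - B * exp (u r)) by lra.
  rewrite <- tech_pow_Rmult. rewrite NN_K1. field. auto.
Qed.


Lemma HPlim : filterlim P (at_right 0) (locally 0).
Proof.
  destruct Hsol as [_ [_ [_ [Hd0 _]]]].
  assert (H : filterlim P (at_right 0) (locally (0 ^ S k * phi (S (S k)) 0))).
  { unfold P, ps. apply lim_mult.
    - apply (lim_comp (fun x => x) (fun x => x ^ S k)). apply lim_R0.
      eapply continuous_of_deriv. apply is_derive_pow, is_derive_id.
    - apply (lim_comp (Derive u) (phi (S (S k)))). exact Hd0. apply phi_cont. }
  replace (0 ^ S k * phi (S (S k)) 0) with 0 in H by (unfold phi; simpl; ring).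
  exact H.
Qed.

Lemma HPneg r : 0 < r < 1 -> P r < 0.
Proof.
  apply (neg_from_lim P (fun r => - B * r ^ S k * exp (u r))).
  - apply HdP.
  - intros x Hx. generalize (pow_lt x (S k) (proj1 Hx)) (exp_pos (u x)); intros.
    assert (0 < B * x ^ S k * exp (u x)) by (apply Rmult_lt_0_compat; [apply Rmult_lt_0_compat|]; auto).
    lra.
  - apply HPlim.
Qed.

Lemma Hdneg r : 0 < r < 1 -> d r < 0.
Proof.
  intro Hr. generalize (HPneg r Hr). unfold P, ps, phi. fold d.
  replace (S (S k) - 2)%nat with k by lia.
  intro H. destruct (Rlt_or_le (d r) 0) as [h|h]; auto. exfalso.
  assert (0 <= r ^ S k * (d r * Rabs (d r) ^ k)).
  { apply Rmult_le_pos. apply pow_le; lra. apply Rmult_le_pos; auto. apply pow_le, Rabs_pos. }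
  lra.
Qed.

Definition sv r := - r * d r.

Lemma sv_pos r : 0 < r < 1 -> 0 < sv r.
Proof. intro Hr. unfold sv. generalize (Hdneg r Hr). nra. Qed.

Lemma Hsig r : 0 < r < 1 -> - P r = sv r ^ S k.
Proof.
  intro Hr. generalize (Hdneg r Hr). intro Hd. unfold P, ps, phi, sv. fold d.
  replace (S (S k) - 2)%nat with k by lia.
  rewrite Rabs_left by auto.
  replace (- r * d r) with (r * (- d r)) by ring. rewrite Rpow_mult_distr.
  simpl. ring.
Qed.

Lemma Hsroot r : 0 < r < 1 -> exp (/ K1 * ln (- P r)) = sv r.
Proof. intro Hr. rewrite Hsig by auto. apply root_pow, sv_pos; auto. Qed.


Let E := fun r => B * r ^ S (S k) * exp (u r) - NN * (- P r)
                  + K1 / NN * ((- P r) * exp (/ K1 * ln (- P r))).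

Lemma HdE r : 0 < r < 1 -> is_derive E r 0.
Proof.
  intro Hr. unfold E. auto_derive.
  { repeat split; first [exact I | eexists; apply Hdu; auto | eexists; apply HdP; auto
      | generalize (HPneg r Hr); lra]. }
  assert (Hm : (match k with 0%nat => 1 | S _ => INR k + 1 end) = K1) by (rewrite <- INR_SK; reflexivity).
  rewrite Hm.
  change (Derive (fun x : R => u x) r) with (d r).
  change (Derive (fun x : R => P x) r) with (Derive P r).
  rewrite (is_derive_unique P r _ (HdP r Hr)).
  rewrite Hsroot by auto. unfold sv.
  assert (HP := HPneg r Hr).
  assert (0 < K1) by apply K1_pos. assert (0 < NN) by apply NN_pos.
  rewrite <- !tech_pow_Rmult. rewrite NN_K1.
  field. nz.
Qed.

Lemma powSS_cont : continuous (fun x => x ^ S (S k)) 0.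
Proof. eapply continuous_of_deriv. apply is_derive_pow, is_derive_id. Qed.

Lemma Hu0 : filterlim u (at_right 0) (locally (u 0)).
Proof. destruct Hsol as [H _]. exact H. Qed.

Lemma Hd0 : filterlim d (at_right 0) (locally 0).
Proof. destruct Hsol as [_ [_ [_ [H _]]]]. exact H. Qed.

Lemma Hrd0 : filterlim (fun r => r * d r) (at_right 0) (locally 0).
Proof.
  assert (H := lim_mult _ _ _ _ lim_R0 Hd0). rewrite Rmult_0_l in H. exact H.
Qed.

Lemma HElim : filterlim E (at_right 0) (locally 0).
Proof.
  apply filterlim_ext_loc with
    (f := fun r => B * r ^ S (S k) * exp (u r) + NN * P r + K1 / NN * (P r * (r * d r))).
  { apply filter_imp with (2 := ev01). intros r Hr. unfold E. rewrite Hsroot by auto.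
    unfold sv. ring. }
  assert (H : filterlim (fun r => B * r ^ S (S k) * exp (u r) + NN * P r + K1 / NN * (P r * (r * d r)))
     (at_right 0) (locally (B * 0 ^ S (S k) * exp (u 0) + NN * 0 + K1 / NN * (0 * 0)))).
  { apply lim_plus. apply lim_plus. apply lim_mult. apply lim_mult. apply lim_const.
    apply (lim_comp (fun x => x) (fun x => x ^ S (S k))). apply lim_R0. apply powSS_cont.
    apply (lim_comp u exp). apply Hu0. apply continuous_exp.
    apply lim_mult. apply lim_const. apply HPlim.
    apply lim_mult. apply lim_const. apply lim_mult. apply HPlim. apply Hrd0. }
  replace (B * 0 ^ S (S k) * exp (u 0) + NN * 0 + K1 / NN * (0 * 0)) with 0 in H by (simpl; ring).
  exact H.
Qed.

Lemma HE0 r : 0 < r < 1 -> E r = 0.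
Proof. apply const_from_lim. apply HdE. apply HElim. Qed.

Lemma Hen r : 0 < r < 1 -> B * r ^ S (S k) * exp (u r) = sv r ^ S k * (K1 / NN) * (nq - sv r).
Proof.
  intro Hr. generalize (HE0 r Hr). unfold E. rewrite Hsroot, Hsig by auto.
  intro H. unfold nq. assert (0 < K1) by apply K1_pos. assert (0 < NN) by apply NN_pos.
  apply Rminus_diag_uniq. rewrite <- H. field. nz.
Qed.

Lemma Hnq r : 0 < r < 1 -> 0 < nq - sv r.
Proof.
  intro Hr. generalize (Hen r Hr). intro H.
  assert (h1 : 0 < B * r ^ S (S k) * exp (u r)).
  { apply Rmult_lt_0_compat; [apply Rmult_lt_0_compat|]; auto. apply pow_lt; lra. apply exp_pos. }
  assert (h2 : 0 < sv r ^ S k * (K1 / NN)).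
  { apply Rmult_lt_0_compat. apply pow_lt, sv_pos; auto. apply Rdiv_lt_0_compat; [apply K1_pos|apply NN_pos]. }
  destruct (Rlt_or_le 0 (nq - sv r)) as [h|h]; auto.
  assert (sv r ^ S k * (K1 / NN) * (nq - sv r) <= 0).
  { nra. }
  lra.
Qed.

Let L := fun r => u r - NN * ln (nq - exp (/ K1 * ln (- P r))).

Lemma HdL r : 0 < r < 1 -> is_derive L r 0.
Proof.
  intro Hr. assert (HP := HPneg r Hr). assert (Hq := Hnq r Hr). assert (Hs := sv_pos r Hr).
  unfold L. auto_derive.
  { rewrite Hsroot by auto.
    repeat split; first [exact I | eexists; apply Hdu; auto | eexists; apply HdP; auto | lra]. }
  change (Derive (fun x : R => u x) r) with (d r).
  change (Derive (fun x : R => P x) r) with (Derive P r).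
  rewrite (is_derive_unique P r _ (HdP r Hr)).
  rewrite Hsroot by auto.
  assert (Hdr : d r = - sv r / r) by (unfold sv; field; lra).
  rewrite Hdr.
  assert (HPs : P r = - sv r ^ S k) by (rewrite <- Hsig by auto; ring).
  rewrite HPs.
  assert (He := Hen r Hr).
  assert (Hrp : 0 < r ^ S (S k)) by (apply pow_lt; lra).
  assert (Hex := exp_pos (u r)).
  assert (HBe : B = sv r ^ S k * (K1 / NN) * (nq - sv r) / (r ^ S (S k) * exp (u r))).
  { rewrite <- He. field. nz. }
  rewrite HBe.
  assert (0 < K1) by apply K1_pos. assert (0 < NN) by apply NN_pos.
  assert (Hsk : 0 < sv r ^ S k) by (apply pow_lt; lra).
  rewrite <- !tech_pow_Rmult.
  rewrite <- !tech_pow_Rmult in Hsk.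
  field. nz.
Qed.

Lemma nq_pos : 0 < nq.
Proof. unfold nq. assert (0 < K1) by apply K1_pos. assert (0 < NN) by apply NN_pos.
  apply Rdiv_lt_0_compat; auto. apply Rmult_lt_0_compat; auto. Qed.

Lemma HLlim : filterlim L (at_right 0) (locally (u 0 - NN * ln nq)).
Proof.
  apply filterlim_ext_loc with (f := fun r => u r + (- NN) * ln (nq + r * d r)).
  { apply filter_imp with (2 := ev01). intros r Hr. unfold L. rewrite Hsroot by auto.
    unfold sv. replace (nq - - r * d r) with (nq + r * d r) by ring. ring. }
  assert (H : filterlim (fun r => u r + (- NN) * ln (nq + r * d r)) (at_right 0)
    (locally (u 0 + (- NN) * ln (nq + 0)))).
  { apply lim_plus. apply Hu0. apply lim_mult. apply lim_const.
    apply (lim_comp (fun r => nq + r * d r) ln).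
    apply lim_plus. apply lim_const. apply Hrd0.
    apply continuous_ln. rewrite Rplus_0_r. apply nq_pos. }
  rewrite Rplus_0_r in H. replace (u 0 - NN * ln nq) with (u 0 + - NN * ln nq) by ring. exact H.
Qed.

Lemma HL r : 0 < r < 1 -> u r = u 0 - NN * ln nq + NN * ln (nq - sv r).
Proof.
  intro Hr. generalize (const_from_lim L _ HdL HLlim r Hr). unfold L. rewrite Hsroot by auto.
  intro H. lra.
Qed.

Definition cc := B * exp (u 0) * NN / (K1 * nq ^ S (S k)).
Definition bb := Rpower cc (/ K1).

Lemma cc_pos : 0 < cc.
Proof.
  unfold cc. assert (0 < K1) by apply K1_pos. assert (0 < NN) by apply NN_pos.
  assert (0 < nq ^ S (S k)) by (apply pow_lt, nq_pos).
  apply Rdiv_lt_0_compat. repeat apply Rmult_lt_0_compat; auto. apply exp_pos.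
  apply Rmult_lt_0_compat; auto.
Qed.

Lemma bb_pos : 0 < bb.
Proof. apply exp_pos. Qed.

Lemma Hform r : 0 < r < 1 -> u r = u 0 - NN * ln (1 + bb * Rpower r q).
Proof.
  intro Hr. assert (Hq := Hnq r Hr). assert (Hs := sv_pos r Hr). assert (Hn := nq_pos).
  assert (Hexp : exp (u r) = exp (u 0) * (nq - sv r) ^ S (S k) / nq ^ S (S k)).
  { rewrite HL by auto. rewrite exp_plus, exp_sub, !exp_NN_ln by auto. field. nz. }
  assert (He := Hen r Hr). rewrite Hexp in He.
  set (t := sv r / (nq - sv r)).
  assert (Ht : 0 < t) by (apply Rdiv_lt_0_compat; auto).
  assert (Htk : t ^ S k = cc * r ^ S (S k)).
  { unfold t, cc. unfold Rdiv. rewrite Rpow_mult_distr, pow_inv.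
    assert (0 < K1) by apply K1_pos. assert (0 < NN) by apply NN_pos.
    assert (Hsk : sv r ^ S k = B * r ^ S (S k) * exp (u 0) * (nq - sv r) ^ S k * NN / (nq ^ S (S k) * K1)).
    { apply Rmult_eq_reg_r with ((K1 / NN) * (nq - sv r)). 2: apply Rgt_not_eq, Rmult_lt_0_compat; [apply Rdiv_lt_0_compat|]; lra.
      rewrite <- Rmult_assoc, <- He. rewrite <- (tech_pow_Rmult (nq - sv r) (S k)). field. nz. }
    rewrite Hsk. field. nz. }
  assert (Hbk : (bb * Rpower r q) ^ S k = cc * r ^ S (S k)).
  { rewrite Rpow_mult_distr. unfold bb. rewrite pow_root by apply cc_pos.
    rewrite <- Rpower_pow by apply exp_pos. rewrite Rpower_mult, INR_SK.
    replace (q * K1) with (INR (S (S k))). rewrite Rpower_pow by lra. reflexivity.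
    rewrite INR_SSK. unfold q. field. generalize K1_pos; lra. }
  assert (Hteq : t = bb * Rpower r q).
  { rewrite <- (root_pow t Ht). rewrite Htk, <- Hbk. apply root_pow.
    apply Rmult_lt_0_compat. apply bb_pos. apply exp_pos. }
  rewrite <- Hteq. rewrite HL by auto.
  replace (1 + t) with (nq / (nq - sv r)) by (unfold t; field; nz).
  rewrite ln_div by auto. ring.
Qed.

Lemma Hu00 : u 0 = NN * ln (1 + bb).
Proof.
  destruct Hsol as [_ [H1 [_ [_ Hu1]]]].
  set (m := fun r => u 0 - NN * ln (1 + bb * exp (q * ln r))).
  assert (Hm : filterlim u (at_left 1) (locally (m 1))).
  { apply filterlim_ext_loc with (f := m).
    { apply filter_imp with (2 := evL01). intros r Hr. unfold m. rewrite (Hform r Hr). reflexivity. }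
    apply cont_at_left1. eapply continuous_of_deriv. unfold m. auto_derive.
    { repeat split; try lra. rewrite ln_1, Rmult_0_r, exp_0. generalize bb_pos; lra. }
    reflexivity. }
  assert (PF : ProperFilter' (at_left 1)) by apply Proper_StrongProper, at_left_proper_filter.
  generalize (@filterlim_locally_unique R R_AbsRing R_NormedModule (at_left 1) PF u (u 1) (m 1) H1 Hm).
  unfold m. rewrite Hu1, ln_1, Rmult_0_r, exp_0, Rmult_1_r. intro H. lra.
Qed.

Lemma classify : exists b, 0 < b /\ B = g b /\ same_on01 u (U b).
Proof.
  exists bb. split; [apply bb_pos|split].
  - unfold g. rewrite (pow_root cc cc_pos : bb ^ S k = cc).
    rewrite <- (exp_NN_ln (1 + bb)) by (generalize bb_pos; lra). rewrite <- Hu00.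
    unfold cc. assert (0 < K1) by apply K1_pos. assert (0 < NN) by apply NN_pos.
    assert (0 < nq ^ S (S k)) by (apply pow_lt, nq_pos).
    assert (0 < exp (u 0)) by apply exp_pos.
    field. nz.
  - intros r Hr. destruct Hsol as [_ [_ [_ [_ Hu1]]]].
    destruct (Req_dec r 0) as [->|h0].
    { rewrite U_at0. apply Hu00. }
    destruct (Req_dec r 1) as [->|h1].
    { rewrite U_at1. exact Hu1. }
    rewrite (Hform r ltac:(lra)). unfold U. rewrite Hu00. unfold pq.
    destruct (Rle_dec r 0); [lra|reflexivity].
Qed.
End Cl.

Definition Ag := K1 / NN * nq ^ S (S k).
Lemma Ag_pos : 0 < Ag.
Proof. unfold Ag. apply Rmult_lt_0_compat. apply Rdiv_lt_0_compat; [apply K1_pos|apply NN_pos].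
  apply pow_lt, nq_pos. Qed.

Lemma g_eq b : g b = Ag * (b ^ S k / (1 + b) ^ S (S k)).
Proof. unfold g, Ag. unfold Rdiv. ring. Qed.

Definition gd b := Ag * (b ^ k * (K1 - b) / (1 + b) ^ S (S (S k))).

Lemma dg b : 0 < b -> is_derive g b (gd b).
Proof.
  intro Hb. apply is_derive_ext with (f := fun b => Ag * (b ^ S k / (1 + b) ^ S (S k))).
  { intro t. rewrite g_eq. reflexivity. }
  auto_derive. { apply Rgt_not_eq. generalize (pow_lt (1+b) (S (S k)) ltac:(lra)). simpl. auto. }
  unfold gd.
  assert (Hm : (match k with 0%nat => 1 | S _ => INR k + 1 end) = K1) by (rewrite <- INR_SK; reflexivity).
  change (match S k with 0%nat => 1 | S _ => INR (S k) + 1 end) with (INR (S (S k))).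
  rewrite Hm.
  rewrite <- !tech_pow_Rmult. field. nz.
Qed.

Lemma gd_pos b : 0 < b < K1 -> 0 < gd b.
Proof.
  intro Hb. unfold gd. apply Rmult_lt_0_compat. apply Ag_pos.
  apply Rdiv_lt_0_compat. apply Rmult_lt_0_compat. apply pow_lt; lra. lra. apply pow_lt; lra.
Qed.

Lemma gd_neg b : K1 < b -> gd b < 0.
Proof.
  intro Hb. assert (0 < K1) by apply K1_pos. unfold gd.
  assert (h : 0 < b ^ k * (b - K1) / (1 + b) ^ S (S (S k))).
  { apply Rdiv_lt_0_compat. apply Rmult_lt_0_compat. apply pow_lt; lra. lra. apply pow_lt; lra. }
  assert (h2 := Ag_pos).
  replace (b ^ k * (K1 - b) / (1 + b) ^ S (S (S k))) with (- (b ^ k * (b - K1) / (1 + b) ^ S (S (S k)))) by (field; nz).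
  nra.
Qed.

Lemma g_MVT x y : 0 < x < y -> exists c, x < c < y /\ g y - g x = gd c * (y - x).
Proof.
  intros H. destruct (MVT_cor2 g gd x y) as [c [Hc1 Hc2]]. lra.
  intros c Hc. apply is_derive_Reals, dg; lra.
  exists c; split; auto.
Qed.

Lemma g_inc x y : 0 < x < y -> y <= K1 -> g x < g y.
Proof.
  intros H Hy. destruct (g_MVT x y H) as [c [Hc1 Hc2]].
  assert (0 < gd c) by (apply gd_pos; lra).
  assert (0 < gd c * (y - x)) by (apply Rmult_lt_0_compat; lra). lra.
Qed.

Lemma g_dec x y : K1 <= x < y -> g y < g x.
Proof.
  intros H. assert (0 < K1) by apply K1_pos.
  destruct (g_MVT x y ltac:(lra)) as [c [Hc1 Hc2]].
  assert (gd c < 0) by (apply gd_neg; lra).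
  assert (gd c * (y - x) < 0).
  { replace (gd c * (y - x)) with (- ((- gd c) * (y - x))) by ring.
    apply Ropp_lt_gt_0_contravar, Rmult_lt_0_compat; lra. }
  lra.
Qed.

Lemma g_le_max b : 0 < b -> g b <= g K1.
Proof.
  intro Hb. destruct (Rtotal_order b K1) as [h|[h|h]].
  - apply Rlt_le, g_inc; lra.
  - subst; lra.
  - apply Rlt_le, g_dec. generalize K1_pos; lra.
Qed.

Lemma g_pos b : 0 < b -> 0 < g b.
Proof.
  intro Hb. rewrite g_eq. apply Rmult_lt_0_compat. apply Ag_pos.
  apply Rdiv_lt_0_compat; apply pow_lt; lra.
Qed.

Lemma g_small b : 0 < b <= 1 -> g b <= Ag * b.
Proof.
  intro Hb. rewrite g_eq. apply Rmult_le_compat_l. apply Rlt_le, Ag_pos.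
  assert (h1 : b ^ k <= 1) by (apply Rle_trans with (1 ^ k); [apply pow_incr; lra|rewrite pow1; lra]).
  assert (h2 : 1 <= (1 + b) ^ S (S k)) by (apply Rle_trans with (1 ^ S (S k)); [rewrite pow1; lra|apply pow_incr; lra]).
  apply Rmult_le_reg_r with ((1 + b) ^ S (S k)). lra.
  unfold Rdiv. rewrite Rmult_assoc, Rinv_l, Rmult_1_r by lra.
  simpl pow at 1. generalize (pow_lt b k (proj1 Hb)). nra.
Qed.

Lemma g_large b : 0 < b -> g b * (1 + b) <= Ag.
Proof.
  intro Hb. rewrite g_eq.
  assert (h1 : b ^ S k <= (1 + b) ^ S k) by (apply pow_incr; lra).
  assert (h2 : 0 < (1 + b) ^ S k) by (apply pow_lt; lra).
  replace (Ag * (b ^ S k / (1 + b) ^ S (S k)) * (1 + b)) with (Ag * (b ^ S k / (1 + b) ^ S k))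
    by (rewrite <- (tech_pow_Rmult (1 + b) (S k)); field; nz).
  rewrite <- (Rmult_1_r Ag) at 2. apply Rmult_le_compat_l. apply Rlt_le, Ag_pos.
  apply Rmult_le_reg_r with ((1 + b) ^ S k). lra.
  unfold Rdiv. rewrite Rmult_assoc, Rinv_l by lra. lra.
Qed.

Lemma g_cont1 B b : 0 < b -> continuity_pt (fun t => g t - B) b.
Proof. intro Hb. eapply cont_of_deriv. apply (is_derive_minus g (fun _ => B)). apply dg; auto. apply is_derive_const. Qed.
Lemma g_cont2 B b : 0 < b -> continuity_pt (fun t => B - g t) b.
Proof. intro Hb. eapply cont_of_deriv. apply (is_derive_minus (fun _ => B) g). apply is_derive_const. apply dg; auto. Qed.
End K.

Lemma root_small k B : 0 < B < g k (K1 k) -> exists a, 0 < a < K1 k /\ g k a = B.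
Proof.
  intros HB. assert (HA := Ag_pos k). assert (HK := K1_pos k).
  assert (HK1 : 1 <= K1 k) by (unfold K1; generalize (pos_INR k); lra).
  set (b0 := Rmin (1/2) (B / (2 * Ag k))).
  assert (Hb0 : 0 < b0) by (apply Rmin_pos; [lra|apply Rdiv_lt_0_compat; lra]).
  assert (Hb0a : b0 <= 1/2) by apply Rmin_l.
  assert (Hb0b : b0 <= B / (2 * Ag k)) by apply Rmin_r.
  assert (Hg0 : g k b0 < B).
  { apply Rle_lt_trans with (Ag k * b0). apply g_small; lra.
    apply Rle_lt_trans with (Ag k * (B / (2 * Ag k))). apply Rmult_le_compat_l; lra.
    replace (Ag k * (B / (2 * Ag k))) with (B / 2) by (field; nz). lra. }
  destruct (Ranalysis5.IVT_interv (fun t => g k t - B) b0 (K1 k)) as [z [Hz Hgz]].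
  - intros a Ha. apply g_cont1. lra.
  - lra.
  - lra.
  - lra.
  - exists z. split; [|lra]. split; [lra|].
    destruct (Req_dec z (K1 k)) as [e|e]; [subst; lra|lra].
Qed.

Lemma root_large k B : 0 < B < g k (K1 k) -> exists a, K1 k < a /\ g k a = B.
Proof.
  intros HB. assert (HA := Ag_pos k). assert (HK := K1_pos k).
  set (b1 := K1 k + Ag k / B + 1).
  assert (HAB : 0 < Ag k / B) by (apply Rdiv_lt_0_compat; lra).
  assert (Hg1 : g k b1 < B).
  { assert (h := g_large k b1 ltac:(unfold b1; lra)).
    assert (h2 : Ag k < B * (1 + b1)).
    { unfold b1. replace (B * (1 + (K1 k + Ag k / B + 1))) with (B * (2 + K1 k) + Ag k) by (field; nz).
      nra. }
    assert (h3 : 0 < g k b1) by (apply g_pos; unfold b1; lra).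
    destruct (Rlt_or_le (g k b1) B) as [h4|h4]; auto.
    assert (B * (1 + b1) <= g k b1 * (1 + b1)) by (apply Rmult_le_compat_r; [unfold b1; lra|exact h4]).
    lra. }
  destruct (Ranalysis5.IVT_interv (fun t => B - g k t) (K1 k) b1) as [z [Hz Hgz]].
  - intros a Ha. apply g_cont2. lra.
  - unfold b1; lra.
  - lra.
  - lra.
  - exists z. split; [|lra].
    destruct (Req_dec z (K1 k)) as [e|e]; [subst; lra|lra].
Qed.

Lemma same_trans u v w : same_on01 u v -> same_on01 v w -> same_on01 u w.
Proof. intros H1 H2 r Hr. rewrite H1, H2; auto. Qed.

Theorem proposition3p2 (n : nat) (hn : (1 < n)%nat) :
  exists Bn : R, 0 < Bn /\
    (forall B, 0 < B < Bn -> exactly_two_solutions n B) /\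
    exactly_one_solution n Bn /\
    (forall B, Bn < B -> no_solution n B).
Proof.
  destruct n as [|[|k]]; try lia.
  assert (HK := K1_pos k).
  exists (g k (K1 k)). split; [apply g_pos; auto|split; [|split]].
  - intros B HB.
    destruct (root_small k B HB) as [a1 [Ha1 Hg1]].
    destruct (root_large k B HB) as [a2 [Ha2 Hg2]].
    exists (U k a1), (U k a2). split; [|split; [|split]].
    + rewrite <- Hg1. apply U_sol; lra.
    + rewrite <- Hg2. apply U_sol; lra.
    + intro H. specialize (H 0 ltac:(lra)). rewrite !U_at0 in H.
      assert (HN := NN_pos k).
      assert (ln (1 + a1) = ln (1 + a2)) by (apply Rmult_eq_reg_l with (NN k); lra).
      apply ln_inv in H0; lra.
    + intros v Hv. destruct (classify k B v ltac:(lra) Hv) as [b [Hb [HgB Hs]]].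
      destruct (Rtotal_order b (K1 k)) as [h|[h|h]].
      * left. destruct (Rtotal_order b a1) as [h'|[h'|h']].
        -- exfalso. assert (g k b < g k a1) by (apply g_inc; lra). lra.
        -- subst; auto.
        -- exfalso. assert (g k a1 < g k b) by (apply g_inc; lra). lra.
      * exfalso. subst. lra.
      * right. destruct (Rtotal_order b a2) as [h'|[h'|h']].
        -- exfalso. assert (g k a2 < g k b) by (apply g_dec; lra). lra.
        -- subst; auto.
        -- exfalso. assert (g k b < g k a2) by (apply g_dec; lra). lra.
  - exists (U k (K1 k)). split. apply U_sol; auto.
    intros v Hv. destruct (classify k _ v (g_pos k (K1 k) HK) Hv) as [b [Hb [HgB Hs]]].
    destruct (Rtotal_order b (K1 k)) as [h|[h|h]].
    + exfalso. assert (g k b < g k (K1 k)) by (apply g_inc; lra). lra.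
    + subst; auto.
    + exfalso. assert (g k b < g k (K1 k)) by (apply g_dec; lra). lra.
  - intros B HB v Hv.
    assert (Hp := g_pos k (K1 k) HK).
    destruct (classify k B v ltac:(lra) Hv) as [b [Hb [HgB Hs]]].
    assert (g k b <= g k (K1 k)) by (apply g_le_max; auto). lra.
Qed.
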